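(* For every $g\ge 1$, $\det(A_{g+1})=4[\det(A_g)]^2[\det(K_g)]^2$.
   Context: The graphs $\mathcal{H}_g$ with hubs $v_1,v_2,v_3,v_4$ and orientations $\mathcal{H}_g^e$ are defined recursively. $\mathcal{H}_1$ is the 4-cycle with edges $\{v_1,v_2\},\{v_1,v_3\},\{v_2,v_4\},\{v_3,v_4\}$, oriented $v_1\to v_2$, $v_1\to v_3$, $v_4\to v_2$, $v_3\to v_4$. For $g>1$, take four disjoint copies $\mathcal{H}_{g-1}^{(i)}$, $i=1,\dots,4$, of $\mathcal{H}_{g-1}$, each oriented as a copy of $\mathcal{H}_{g-1}^e$, with hubs $v_k^{(i)}$; identify $v_1^{(1)},v_1^{(4)}$ as $v_1$, $v_2^{(2)},v_1^{(3)}$ as $v_4$, $v_2^{(1)},v_1^{(2)}$ as $v_3$, and $v_2^{(3)},v_2^{(4)}$ as $v_2$; $\mathcal{H}_g^e$ is the union of the copies' orientations. $A_g$ is the skew adjacency matrix of $\mathcal{H}_g^e$: its $(u,v)$ entry is $1$ if $u\to v$ is an arc, $-1$ if $v\to u$ is an arc, and $0$ otherwise. $K_g$ is the submatrix of $A_g$ obtained by deleting the rows and columns corresponding to $v_1$ and $v_2$. *)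

(* Defs.v *)
From HB Require Import structures.
From mathcomp Require Import all_boot all_order all_algebra.
Set Implicit Arguments. Unset Strict Implicit. Unset Printing Implicit Defensive.
Import Order.TTheory GRing.Theory Num.Theory.
Local Open Scope ring_scope.

(* Vertices of H_g are labelled 0 .. nv g - 1 (naturals); the hubs
   v1, v2, v3, v4 are the labels 0, 1, 2, 3.  The index g >= 1;
   the value at g = 0 is a junk duplicate of g = 1. *)

Fixpoint nv (g : nat) : nat :=
  match g with
  | 0 | 1 => 4
  | g'.+1 => (4 * nv g' - 4)%N
  end.

(* Image hubs of the hubs v1, v2 of copy i (i = 0..3 stands for copies 1..4):
   copy 1: v1 -> v1, v2 -> v3 ; copy 2: v1 -> v3, v2 -> v4 ;
   copy 3: v1 -> v4, v2 -> v2 ; copy 4: v1 -> v1, v2 -> v2. *)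
Definition hub1 (i : nat) : nat :=
  match i with 0 => 0 | 1 => 2 | 2 => 3 | _ => 0 end%N.
Definition hub2 (i : nat) : nat :=
  match i with 0 => 2 | 1 => 3 | 2 => 1 | _ => 1 end%N.

(* Embedding of vertex k of H_g, copy i, into H_{g+1}: its hubs v1, v2
   are identified with the indicated hubs of H_{g+1}; all other vertices
   (including the copy's v3, v4) become fresh vertices. *)
Definition embed (n i k : nat) : nat :=
  match k with
  | 0 => hub1 i
  | 1 => hub2 i
  | _ => (4 + i * (n - 2) + (k - 2))%N
  end.

(* Arcs (u, v) meaning u -> v of the orientation H_g^e. *)
Fixpoint arcs (g : nat) : seq (nat * nat) :=
  match g with
  | 0 | 1 => [:: (0, 1); (0, 2); (3, 1); (2, 3)]%N
  | g'.+1 =>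
      flatten [seq [seq (embed (nv g') i a.1, embed (nv g') i a.2)
                   | a <- arcs g'] | i <- iota 0 4]
  end.

Definition skew (g u v : nat) : int :=
  if (u, v) \in arcs g then 1 else if (v, u) \in arcs g then -1 else 0.

Definition A (g : nat) : 'M[int]_(nv g) := \matrix_(i, j) skew g i j.

Definition K (g : nat) : 'M[int]_(nv g - 2) :=
  \matrix_(i, j) skew g (i + 2)%N (j + 2)%N.

(* Main.v *)
Require Import Defs.
From mathcomp Require Import all_boot all_order all_algebra.
Local Open Scope ring_scope.
From HB Require Import structures.
From mathcomp Require Import zify ring lra.
Import Defs.
Set Implicit Arguments. Unset Strict Implicit. Unset Printing Implicit Defensive.
Import Order.TTheory GRing.Theory Num.Theory.
Local Close Scope ring_scope.

Lemma nv_ge4 g : (4 <= nv g)%N.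
Proof. elim: g => [|g IH] //; case: g IH => // g IH; have -> : nv g.+2 = (4 * nv g.+1 - 4)%N by []. lia. Qed.

Lemma nvS g : (1 <= g)%N -> nv g.+1 = (4 * nv g - 4)%N.
Proof. by case: g. Qed.

Definition loc (n i u : nat) : option nat :=
  if (u < 4)%N then (if u == hub1 i then Some 0%N else if u == hub2 i then Some 1%N else None)
  else if ((u - 4) %/ (n - 2) == i)%N then Some ((u - 4) %% (n - 2) + 2)%N else None.

Lemma embed_loc n i a u : (4 <= n)%N -> (i < 4)%N -> (a < n)%N ->
  (embed n i a == u) = (loc n i u == Some a).
Proof.
move=> n4 i4 an; rewrite /embed /loc.
case: a an => [|[|k]] an.
- case: i i4 => [|[|[|[|//]]]] _; case: u => [|[|[|[|u]]]] //=;
  by case: ifP => //= _; rewrite addn2.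
- case: i i4 => [|[|[|[|//]]]] _; case: u => [|[|[|[|u]]]] //=;
  by case: ifP => //= _; rewrite addn2.
- set m := (n - 2)%N.
  have km : (k < m)%N by rewrite /m; lia.
  have m0 : (0 < m)%N by rewrite /m; lia.
  have -> : (k.+2 - 2 = k)%N by lia.
  apply/eqP/eqP.
  + move=> <- /=.
    have -> : (4 + i * m + k - 4 = i * m + k)%N by lia.
    rewrite divnMDl // divn_small // addn0 eqxx modnMDl modn_small //.
    by rewrite addn2.
  + case: ifP => u4; first by case: ifP => _ //; case: ifP. case: eqP => hi // [hk].
    have := divn_eq (u - 4) m; rewrite hi => e.
    have hk' : ((u - 4) %% m = k)%N by lia.
    move: e; rewrite hk'; set t := (i * m)%N; lia.
Qed.

Lemma loc_embed n i a : (4 <= n)%N -> (i < 4)%N -> (a < n)%N -> loc n i (embed n i a) = Some a.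
Proof. by move=> *; apply/eqP; rewrite -embed_loc. Qed.

Definition pairarc (s : seq (nat * nat)) (o1 o2 : option nat) : bool :=
  if o1 is Some a then (if o2 is Some b then (a, b) \in s else false) else false.

Lemma pairarc_None2 s o : pairarc s o None = false.
Proof. by case: o. Qed.

Lemma arcsSS g : arcs g.+2 =
  flatten [seq [seq (embed (nv g.+1) i a.1, embed (nv g.+1) i a.2)
                   | a <- arcs g.+1] | i <- iota 0 4].
Proof. by []. Qed.

Lemma mem_arcsS g u v : (1 <= g)%N ->
  (forall a b, (a, b) \in arcs g -> (a < nv g)%N && (b < nv g)%N) ->
  ((u, v) \in arcs g.+1) =
  has (fun i => pairarc (arcs g) (loc (nv g) i u) (loc (nv g) i v)) (iota 0 4).
Proof.
case: g => // g _ H; rewrite arcsSS.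
have n4 := nv_ge4 g.+1.
apply/flattenP/hasP.
- case=> s /mapP [i iin ->] /mapP [[a b] ab [-> ->]].
  have i4 : (i < 4)%N by move: iin; rewrite mem_iota.
  have /andP [an bn] := H _ _ ab.
  by exists i => //; rewrite !loc_embed.
- case=> i iin; have i4 : (i < 4)%N by move: iin; rewrite mem_iota.
  rewrite /pairarc; case E1: loc => [a|] //; case E2: loc => [b|] // ab.
  have /andP [an bn] := H _ _ ab.
  exists [seq (embed (nv g.+1) i a.1, embed (nv g.+1) i a.2) | a <- arcs g.+1].
    by apply/mapP; exists i.
  apply/mapP; exists (a, b) => //=.
  by move/eqP: E1; rewrite -embed_loc // => /eqP ->; move/eqP: E2; rewrite -embed_loc // => /eqP ->.
Qed.

Lemma loc_bound n i u a : (4 <= n)%N -> (i < 4)%N -> loc n i u = Some a ->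
  (u < 4 + 4 * (n - 2))%N && (a < n)%N.
Proof.
move=> n4 i4; rewrite /loc; case: ifP => u4.
  by case: ifP => _; [case=> <-|case: ifP => _ // [<-]]; apply/andP; split; lia.
case: eqP => // hi [<-].
have m0 : (0 < n - 2)%N by lia.
have h1 := ltn_pmod (u - 4) m0.
have h2 : ((u - 4) %/ (n - 2) < 4)%N by rewrite hi.
rewrite ltn_divLR // in h2.
apply/andP; split; lia.
Qed.

Lemma loc_hub_lt2 n i u a : (u < 2)%N -> loc n i u = Some a -> a = u.
Proof. by case: u => [|[|//]] _; case: i => [|[|[|i]]] //= [<-]. Qed.

Lemma loc_hub_small n i u a : (u < 4)%N -> loc n i u = Some a -> (a < 2)%N.
Proof. rewrite /loc => ->; case: ifP => _; first by case=> <-. by case: ifP => // _ [<-]. Qed.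

Lemma loc_big_eq n i i' u a a' : (4 <= u)%N -> loc n i u = Some a -> loc n i' u = Some a' -> i = i'.
Proof.
rewrite /loc => u4; have -> : (u < 4)%N = false by apply/negbTE; rewrite -leqNgt.
by case: eqP => // <- _; case: eqP.
Qed.

Lemma hub_pair n u v i i' : (u < 4)%N -> (v < 4)%N -> u != v -> (i < 4)%N -> (i' < 4)%N ->
  loc n i u != None -> loc n i v != None -> loc n i' u != None -> loc n i' v != None -> i = i'.
Proof.
case: u => [|[|[|[|//]]]] _; case: v => [|[|[|[|//]]]] _ //= _;
case: i => [|[|[|[|//]]]] _; case: i' => [|[|[|[|//]]]] _ //=.
Qed.

Definition Inv g := (0, 1)%N \in arcs g /\ forall a b, (a, b) \in arcs g ->
  [/\ (a < nv g)%N, (b < nv g)%N, ((a < 2) && (b < 2))%N ==> (a == 0%N) && (b == 1%N)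
    & (b, a) \notin arcs g].

Lemma Inv1 : Inv 1.
Proof.
split => // a b; rewrite !inE; case/or4P => /eqP [-> ->] //.
Qed.

Lemma InvS g : (1 <= g)%N -> Inv g -> Inv g.+1.
Proof.
move=> g1 [h01 H].
have n4 := nv_ge4 g.
have Hb : forall a b, (a, b) \in arcs g -> (a < nv g)%N && (b < nv g)%N.
  by move=> a b /H [-> ->].
split.
  by rewrite mem_arcsS //; apply/hasP; exists 3%N.
move=> u v; rewrite mem_arcsS // => /hasP [i iin].
have i4 : (i < 4)%N by move: iin; rewrite mem_iota.
rewrite /pairarc; case E1: loc => [x|] //; case E2: loc => [y|] // xy.
have [xn yn hxy nyx] := H _ _ xy.
have /andP [ub _] := loc_bound n4 i4 E1.
have /andP [vb _] := loc_bound n4 i4 E2.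
rewrite nvS //.
split; [lia|lia| |].
- apply/implyP => /andP [u2 v2].
  have ex := loc_hub_lt2 u2 E1; have ey := loc_hub_lt2 v2 E2.
  by subst; move: hxy; rewrite u2 v2.
- rewrite mem_arcsS //; apply/hasP => [[i' i'in]].
  have i'4 : (i' < 4)%N by move: i'in; rewrite mem_iota.
  rewrite /pairarc; case E3: loc => [y'|] //; case E4: loc => [x'|] // yx.
  have ii : i = i'.
    case: (leqP 4 u) => [u4|u4]; first exact: loc_big_eq u4 E1 E4.
    case: (leqP 4 v) => [v4|v4]; first exact: loc_big_eq v4 E2 E3.
    case: (eqVneq u v) => [euv|nuv].
      subst v; move: E2; rewrite E1 => -[exy]; subst y.
      by move: (H _ _ xy) => [_ _ _]; rewrite xy.
    by apply: (hub_pair (n:=nv g) u4 v4 nuv i4 i'4); rewrite ?E1 ?E2 ?E3 ?E4.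
  subst i'; move: E3 E4; rewrite E1 E2 => -[ey] [ex]; subst y' x'.
  by rewrite yx in nyx.
Qed.

Lemma Inv_all g : (1 <= g)%N -> Inv g.
Proof.
elim: g => // g IH _; case: g IH => [_|g IH]; first exact: Inv1.
by apply: InvS => //; apply: IH.
Qed.

Local Open Scope ring_scope.

Lemma loc_blk n i' i j : (4 <= n)%N -> (j < n - 2)%N ->
  loc n i' (4 + i * (n - 2) + j) = if i == i' then Some (j + 2)%N else None.
Proof.
move=> n4 jm; rewrite /loc /=.
have m0 : (0 < n - 2)%N by lia.
have -> : (4 + i * (n - 2) + j - 4 = i * (n - 2) + j)%N by lia.
by rewrite divnMDl // divn_small // addn0 modnMDl modn_small.
Qed.

Lemma Hb g : (1 <= g)%N -> forall a b, (a, b) \in arcs g -> (a < nv g)%N && (b < nv g)%N.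
Proof. by move=> g1 a b /(proj2 (Inv_all g1)) [-> ->]. Qed.

Lemma skew_anti g (u v : nat) : (1 <= g)%N -> skew g u v = - skew g v u.
Proof.
move=> g1; have [_ H] := Inv_all g1; rewrite /skew.
case: ifP => uv; first by have [_ _ _ /negbTE ->] := H _ _ uv.
by case: ifP.
Qed.

Lemma memhub g (a b : nat) : (1 <= g)%N -> (a < 2)%N -> (b < 2)%N ->
  ((a, b) \in arcs g) = (a == 0%N) && (b == 1%N).
Proof.
move=> g1 a2 b2; have [h01 H] := Inv_all g1.
apply/idP/idP; first by move=> /H [_ _ /implyP hh _]; apply: hh; rewrite a2 b2.
by case/andP => /eqP -> /eqP ->.
Qed.

Lemma skew_hubs g (a b : nat) : (1 <= g)%N -> (a < 2)%N -> (b < 2)%N -> skew g a b = skew 1 a b.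
Proof.
move=> g1 a2 b2; rewrite /skew !memhub //.
Qed.

Lemma skew_succ_hh g (h h' : nat) : (1 <= g)%N -> (h < 4)%N -> (h' < 4)%N ->
  skew g.+1 h h' = skew 1 h h'.
Proof.
move=> g1 h4 h'4.
have E : forall u v, (u < 4)%N -> (v < 4)%N -> ((u, v) \in arcs g.+1) = ((u, v) \in arcs 1).
  move=> u v u4 v4; rewrite mem_arcsS //; last exact: Hb.
  case: u u4 => [|[|[|[|//]]]] _; case: v v4 => [|[|[|[|//]]]] _;
  rewrite /= /pairarc /= ?memhub //.
by rewrite /skew !E.
Qed.

Lemma skew_succ_blk g (u i j : nat) : (1 <= g)%N -> (i < 4)%N -> (j < nv g - 2)%N ->
  skew g.+1 u (4 + i * (nv g - 2) + j) =
  if loc (nv g) i u is Some a then skew g a (j + 2) else 0.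
Proof.
move=> g1 i4 jm; have n4 := nv_ge4 g.
rewrite /skew !mem_arcsS //; try exact: Hb.
rewrite /= !loc_blk //.
case: i i4 => [|[|[|[|//]]]] _ /=; rewrite ?pairarc_None2 /= ?orbF;
by case: loc => [a|] //=.
Qed.

Definition mat p q (f : nat -> nat -> rat) : 'M[rat]_(p, q) := \matrix_(i < p, j < q) f i j.

Lemma mat_block p1 p2 q1 q2 f : mat (p1 + p2) (q1 + q2) f =
  block_mx (mat p1 q1 f) (mat p1 q2 (fun i j => f i (q1 + j)%N))
           (mat p2 q1 (fun i j => f (p1 + i)%N j)) (mat p2 q2 (fun i j => f (p1 + i)%N (q1 + j)%N)).
Proof.
rewrite -[LHS]submxK; congr block_mx; apply/matrixP => i j; by rewrite !mxE.
Qed.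

Lemma mat_row p q1 q2 f : mat p (q1 + q2) f =
  row_mx (mat p q1 f) (mat p q2 (fun i j => f i (q1 + j)%N)).
Proof. rewrite -[LHS]hsubmxK; congr row_mx; apply/matrixP => i j; by rewrite !mxE. Qed.

Lemma eq_mat p q f f' : (forall i j, (i < p)%N -> (j < q)%N -> f i j = f' i j) ->
  mat p q f = mat p q f'.
Proof. by move=> H; apply/matrixP => i j; rewrite !mxE H. Qed.

Lemma mat_cast p p' (e : p = p') f : castmx (e, e) (mat p p f) = mat p' p' f.
Proof. by case: p' / e; rewrite castmx_id. Qed.

Lemma det_cast (R : comNzRingType) p p' (e : p = p') (M : 'M[R]_p) : \det (castmx (e, e) M) = \det M.
Proof. by case: p' / e; rewrite castmx_id. Qed.

Lemma schur (R : comNzRingType) p q (Z : 'M[R]_p) (C : 'M[R]_(p, q)) (E : 'M[R]_(q, p))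
   (D Di : 'M[R]_q) : Di *m D = 1%:M ->
  \det (block_mx Z C E D) = \det D * \det (Z - C *m Di *m E).
Proof.
move=> hD.
have -> : block_mx Z C E D = block_mx 1%:M (C *m Di) 0 1%:M *m block_mx (Z - C *m Di *m E) 0 E D.
  by rewrite mulmx_block !mul1mx !mul0mx ?mulmx0 !add0r ?addr0 -!mulmxA hD mulmx1 subrK.

by rewrite det_mulmx det_ublock det_lblock !det1 !mul1r mulrC.
Qed.

Lemma det2 (R : comNzRingType) (M : 'M[R]_2) : \det M = M 0 0 * M 1 1 - M 0 1 * M 1 0.
Proof.
rewrite (expand_det_row M 0) !big_ord_recl big_ord0 addr0 /cofactor !det_mx11 !mxE /=.
have -> : lift (0 : 'I_2) (0 : 'I_1) = 1 by apply/val_inj.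
have -> : lift (1 : 'I_2) (0 : 'I_1) = 0 by apply/val_inj.
rewrite /bump /= expr0 expr1 mul1r mulN1r mulrN. done.
Qed.

Definition sk g (u v : nat) : rat := (skew g u v)%:~R.
Definition Jm := mat 2 2 (fun a b => sk 1 (2 + a) (2 + b)).
Definition Hm o := mat (4 - o) (4 - o) (fun h h' => sk 1 (o + h) (o + h')).
Definition Em g o i := mat (4 - o) 2
  (fun h a => if loc (nv g) i (o + h) is Some a' then (a' == a)%:R else 0).

Lemma sum_EJE g o : (o <= 4)%N ->
  \sum_(i < 4) (Em g o i *m Jm *m (Em g o i)^T) = Hm o.
Proof.
move=> o4; apply/matrixP => h h'.
rewrite summxE; rewrite !(big_ord0, big_ord_recl, mxE) /=.
have hb : (o + h < 4)%N by have := ltn_ord h; lia.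
have hb' : (o + h' < 4)%N by have := ltn_ord h'; lia.
move: (o + h)%N (o + h')%N hb hb' => u v.
case: u => [|[|[|[|//]]]] _; case: v => [|[|[|[|//]]]] _;
rewrite /sk /skew /= ?mxE /=; ring.
Qed.

Definition Bm g := mat 2 (nv g - 2) (fun a j => sk g a (2 + j)).
Definition Km g := mat (nv g - 2) (nv g - 2) (fun i j => sk g (2 + i) (2 + j)).

Lemma Ar_mat g : map_mx (intr : int -> rat) (A g) = mat (nv g) (nv g) (sk g).
Proof. by apply/matrixP => i j; rewrite !mxE. Qed.

Lemma Kr_mat g : map_mx (intr : int -> rat) (K g) = Km g.
Proof. by apply/matrixP => i j; rewrite !mxE /sk addnC [(j + 2)%N]addnC. Qed.

Lemma Jm_val : Jm 0 0 = 0 /\ Jm 0 1 = 1 /\ Jm 1 0 = -1 /\ Jm 1 1 = 0.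
Proof. by rewrite !mxE /sk /skew /=. Qed.

Lemma det_Jm : \det Jm = 1.
Proof. by rewrite det2; have [-> [-> [-> ->]]] := Jm_val; rewrite mul0r sub0r mulrN1 opprK. Qed.

Lemma sk_anti g u v : (1 <= g)%N -> sk g u v = - sk g v u.
Proof. by move=> g1; rewrite /sk (skew_anti _ _ g1) mulrNz. Qed.

Lemma Km_tr g : (1 <= g)%N -> (Km g)^T = - Km g.
Proof. by move=> g1; apply/matrixP => i j; rewrite !mxE (sk_anti _ _ g1). Qed.

Lemma A_block g (e : nv g = (2 + (nv g - 2))%N) : (1 <= g)%N ->
  castmx (e, e) (mat (nv g) (nv g) (sk g)) = block_mx Jm (Bm g) (- (Bm g)^T) (Km g).
Proof.
move=> g1; rewrite mat_cast mat_block; congr block_mx.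
- apply: eq_mat => h h' h2 h'2; rewrite /sk skew_hubs //.
  by case: h h2 => [|[|//]] _; case: h' h'2 => [|[|//]] _.
- by apply/matrixP => i j; rewrite !mxE (sk_anti _ _ g1).
Qed.

Lemma inv_tr (m : nat) (Km Kinv : 'M[rat]_m) : Km^T = - Km -> Kinv *m Km = 1%:M -> Km *m Kinv = 1%:M ->
  Kinv^T = - Kinv.
Proof.
move=> hT h1 h2.
have h3 : Kinv^T *m Km^T = 1%:M by rewrite -trmx_mul h2 trmx1.
have h4 : Kinv^T *m Km = - 1%:M.
  by rewrite -[Km]opprK -hT mulmxN h3.
by rewrite -[Kinv^T]mulmx1 -h2 mulmxA h4 mulNmx mul1mx.
Qed.

Lemma mx22_eq (M N : 'M[rat]_2) : M 0 0 = N 0 0 -> M 0 1 = N 0 1 ->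
  M 1 0 = N 1 0 -> M 1 1 = N 1 1 -> M = N.
Proof.
move=> e1 e2 e3 e4; apply/matrixP => i j.
have [->|->] : i = 0 \/ i = 1.
  by case: i => [[|[|//]] Hi]; [left|right]; apply/val_inj.
all: have [->|->] : j = 0 \/ j = 1 by case: j => [[|[|//]] Hj]; [left|right]; apply/val_inj.
all: by [].
Qed.

Lemma level_g g (Kinv : 'M[rat]_(nv g - 2)) : (1 <= g)%N ->
  Kinv *m Km g = 1%:M -> Km g *m Kinv = 1%:M ->
  \det (mat (nv g) (nv g) (sk g)) =
    \det (Km g) * (1 + (Bm g *m Kinv *m (Bm g)^T) 0 1) ^+ 2 /\
  Bm g *m Kinv *m (Bm g)^T = (Bm g *m Kinv *m (Bm g)^T) 0 1 *: Jm.
Proof.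
move=> g1 h1 h2.
set S := Bm g *m Kinv *m (Bm g)^T.
have ST : S^T = - S.
  rewrite /S !trmx_mul trmxK (inv_tr (Km_tr g1) h1 h2) mulmxA mulmxN mulNmx.
  by [].
have S00 : S 0 0 = 0.
  have : S^T 0 0 = (- S) 0 0 by rewrite ST.
  rewrite !mxE => e; lra.
have S11 : S 1 1 = 0.
  have : S^T 1 1 = (- S) 1 1 by rewrite ST.
  rewrite !mxE => e; lra.
have S10 : S 1 0 = - S 0 1.
  have : S^T 0 1 = (- S) 0 1 by rewrite ST.
  by rewrite !mxE.
have [J00 [J01 [J10 J11]]] := Jm_val.
have SJ : S = S 0 1 *: Jm.
  by apply: mx22_eq; rewrite [in RHS]mxE ?S00 ?S11 ?S10 ?J00 ?J01 ?J10 ?J11 ?mulr0 ?mulr1 ?mulrN1.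
split=> //.
have e : nv g = (2 + (nv g - 2))%N by have := nv_ge4 g; lia.
rewrite -(det_cast e) A_block // (schur _ _ _ h1) mulmxN opprK -/S SJ.
by rewrite -{1}[Jm]scale1r -scalerDl detZ det_Jm mulr1 -SJ mulrC.
Qed.

Lemma sk_diag g i j k u v : (1 <= g)%N -> (i < 4)%N -> (j < nv g - 2)%N -> (k < nv g - 2)%N ->
  u = (4 + i * (nv g - 2) + j)%N -> v = (4 + i * (nv g - 2) + k)%N ->
  sk g.+1 u v = sk g (2 + j) (2 + k).
Proof.
move=> g1 i4 jm km -> ->; have n4 := nv_ge4 g.
by rewrite /sk skew_succ_blk // loc_blk // eqxx addnC [(k + 2)%N]addnC.
Qed.

Lemma sk_off g i j u v : (1 <= g)%N -> (i < 4)%N -> (j < nv g - 2)%N ->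
  u = (4 + i * (nv g - 2) + j)%N ->
  ((4 + i.+1 * (nv g - 2) <= v)%N || ((4 <= v)%N && (v < 4 + i * (nv g - 2))%N)) ->
  sk g.+1 u v = 0 /\ sk g.+1 v u = 0.
Proof.
move=> g1 i4 jm -> hv; have n4 := nv_ge4 g.
have m0 : (0 < nv g - 2)%N by lia.
have v4 : (4 <= v)%N by case/orP: hv => [|/andP []]; lia.
have hl : loc (nv g) i v = None.
  rewrite /loc ifN; last by rewrite -leqNgt.
  case/orP: hv => [hv|/andP [_ hv]].
    have : (i.+1 <= (v - 4) %/ (nv g - 2))%N by rewrite leq_divRL //; lia.
    by case: eqP => // ->; rewrite ltnn.
  have : ((v - 4) %/ (nv g - 2) < i)%N by rewrite ltn_divLR //; lia.
  by case: eqP => // ->; rewrite ltnn.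
have h2 : sk g.+1 v (4 + i * (nv g - 2) + j) = 0 by rewrite /sk skew_succ_blk // hl.
by split => //; rewrite (sk_anti _ _ (ltn0Sn g)) h2 oppr0.
Qed.

Lemma sk_off1 g i j u v : (1 <= g)%N -> (i < 4)%N -> (j < nv g - 2)%N ->
  u = (4 + i * (nv g - 2) + j)%N ->
  ((4 + i.+1 * (nv g - 2) <= v)%N || ((4 <= v)%N && (v < 4 + i * (nv g - 2))%N)) ->
  sk g.+1 u v = 0.
Proof. by move=> *; case: (@sk_off g i j u v). Qed.

Lemma sk_off2 g i j u v : (1 <= g)%N -> (i < 4)%N -> (j < nv g - 2)%N ->
  u = (4 + i * (nv g - 2) + j)%N ->
  ((4 + i.+1 * (nv g - 2) <= v)%N || ((4 <= v)%N && (v < 4 + i * (nv g - 2))%N)) ->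
  sk g.+1 v u = 0.
Proof. by move=> *; case: (@sk_off g i j u v). Qed.

Lemma mat_zero p q f : (forall i j, (i < p)%N -> (j < q)%N -> f i j = 0) -> mat p q f = 0.
Proof. by move=> H; apply/matrixP => i j; rewrite !mxE H. Qed.

Definition Cm g o i := mat (4 - o) (nv g - 2)
  (fun h j => sk g.+1 (o + h) (4 + i * (nv g - 2) + j)).
Definition Crow g o := row_mx (Cm g o 0) (row_mx (Cm g o 1) (row_mx (Cm g o 2) (Cm g o 3))).
Definition diag4 (m : nat) (X : 'M[rat]_m) :=
  block_mx X 0 0 (block_mx X 0 0 (block_mx X 0 0 X)).
Definition Ym g o :=
  mat (4 - o + ((nv g - 2) + ((nv g - 2) + ((nv g - 2) + (nv g - 2)))))
      (4 - o + ((nv g - 2) + ((nv g - 2) + ((nv g - 2) + (nv g - 2)))))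
      (fun u v => sk g.+1 (o + u) (o + v)).

Lemma BR_eq g o : (1 <= g)%N -> (o <= 4)%N ->
  mat ((nv g - 2) + ((nv g - 2) + ((nv g - 2) + (nv g - 2))))
      ((nv g - 2) + ((nv g - 2) + ((nv g - 2) + (nv g - 2))))
      (fun j k => sk g.+1 (o + (4 - o + j)) (o + (4 - o + k))) = diag4 (Km g).
Proof.
move=> g1 o4.
rewrite /diag4 !mat_block.
congr block_mx; last congr block_mx; last congr block_mx.
all: try (apply: mat_zero => j k hj hk /=).
all: try (apply: eq_mat => j k hj hk /=).
- by apply: (sk_diag (i:=0)); lia.
- by apply: (sk_off1 (i:=0) (j:=j)); lia.
- by apply: (sk_off2 (i:=0) (j:=k)); lia.
- by apply: (sk_diag (i:=1)); lia.
- by apply: (sk_off1 (i:=1) (j:=j)); lia.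
- by apply: (sk_off2 (i:=1) (j:=k)); lia.
- by apply: (sk_diag (i:=2)); lia.
- by apply: (sk_off1 (i:=2) (j:=j)); lia.
- by apply: (sk_off2 (i:=2) (j:=k)); lia.
- by apply: (sk_diag (i:=3)); lia.
Qed.

Lemma Y_block g o : (1 <= g)%N -> (o <= 4)%N ->
  Ym g o = block_mx (Hm o) (Crow g o) (- (Crow g o)^T) (diag4 (Km g)).
Proof.
move=> g1 o4; rewrite /Ym mat_block BR_eq //.
have TR : mat (4 - o) ((nv g - 2) + ((nv g - 2) + ((nv g - 2) + (nv g - 2))))
   (fun h j => sk g.+1 (o + h) (o + (4 - o + j))) = Crow g o.
  rewrite /Crow !mat_row /Cm; congr row_mx; [|congr row_mx; [|congr row_mx]];
  by apply: eq_mat => h j _ _ /=; f_equal; lia.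
congr block_mx.
- by apply: eq_mat => h h' hh hh'; rewrite /sk skew_succ_hh //; lia.
- exact: TR.
- rewrite -TR; apply/matrixP => j h; rewrite !mxE.
  by rewrite (sk_anti _ _ (ltn0Sn g)).
Qed.

Lemma C_eq g o i : (1 <= g)%N -> (o <= 4)%N -> (i < 4)%N -> Cm g o i = Em g o i *m Bm g.
Proof.
move=> g1 o4 i4; apply/matrixP => h j.
rewrite !mxE !big_ord_recl big_ord0 !mxE /=.
have hb : (o + h < 4)%N by have := ltn_ord h; lia.
rewrite /sk skew_succ_blk //.
case E: loc => [a|]; last by rewrite !mul0r addr0.
have := loc_hub_small hb E.
by case: a E => [|[|//]] _ _ /=; rewrite ?mul1r ?mul0r ?addr0 ?add0r addnC.
Qed.

Lemma row4_mul p m (C0 C1 C2 C3 : 'M[rat]_(p, m)) X :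
  row_mx C0 (row_mx C1 (row_mx C2 C3)) *m diag4 X *m (row_mx C0 (row_mx C1 (row_mx C2 C3)))^T
  = C0 *m X *m C0^T + (C1 *m X *m C1^T + (C2 *m X *m C2^T + C3 *m X *m C3^T)).
Proof.
rewrite /diag4 !tr_row_mx !mul_row_block !mulmx0 !addr0 !add0r !mul_row_col.
by [].
Qed.

Lemma diag4_mul m (X Y : 'M[rat]_m) : diag4 X *m diag4 Y = diag4 (X *m Y).
Proof. by rewrite /diag4 !mulmx_block !mulmx0 !mul0mx !addr0 !add0r. Qed.

Lemma diag4_1 m : diag4 (1%:M : 'M[rat]_m) = 1%:M.
Proof. by rewrite /diag4 -!scalar_mx_block. Qed.

Lemma det_diag4 m (X : 'M[rat]_m) : \det (diag4 X) = \det X ^+ 4.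
Proof. by rewrite /diag4 !det_ublock !exprS expr0 mulr1. Qed.

Lemma level_succ g o (Kinv : 'M[rat]_(nv g - 2)) : (1 <= g)%N -> (o <= 4)%N ->
  Kinv *m Km g = 1%:M -> Km g *m Kinv = 1%:M ->
  \det (Ym g o) = \det (Km g) ^+ 4 *
     ((1 + (Bm g *m Kinv *m (Bm g)^T) 0 1) ^+ (4 - o) * \det (Hm o)).
Proof.
move=> g1 o4 h1 h2.
have [_ SJ] := level_g g1 h1 h2.
set s := (Bm g *m Kinv *m (Bm g)^T) 0 1 in SJ *.
have HS : Em g o 0 *m Jm *m (Em g o 0)^T + (Em g o 1 *m Jm *m (Em g o 1)^T +
   (Em g o 2 *m Jm *m (Em g o 2)^T + Em g o 3 *m Jm *m (Em g o 3)^T)) = Hm o.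
  by rewrite -(sum_EJE g o4) !big_ord_recl big_ord0 addr0.
have CE : forall i, (i < 4)%N -> Cm g o i *m Kinv *m (Cm g o i)^T = s *: (Em g o i *m Jm *m (Em g o i)^T).
  move=> i i4; rewrite C_eq // trmx_mul.
  have -> : Em g o i *m Bm g *m Kinv *m ((Bm g)^T *m (Em g o i)^T) =
     Em g o i *m (Bm g *m Kinv *m (Bm g)^T) *m (Em g o i)^T by rewrite !mulmxA.
  by rewrite SJ -scalemxAr -scalemxAl.
rewrite Y_block // (schur _ _ _ (Di := diag4 Kinv)); last by rewrite diag4_mul h1 diag4_1.
rewrite det_diag4 mulmxN opprK row4_mul !CE // -!scalerDr HS.
by rewrite -{1}[Hm o]scale1r -scalerDl detZ.
Qed.

Lemma JJ : (- Jm) *m Jm = 1%:M.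
Proof.
by apply: mx22_eq; rewrite !mxE !big_ord_recl big_ord0 !mxE /sk /skew /=; ring.
Qed.

Lemma s1 : (Bm 1 *m (- Jm) *m (Bm 1)^T) 0 1 = 1.
Proof.
by rewrite !(big_ord0, big_ord_recl, mxE) /sk /skew /=; ring.
Qed.

Lemma det_H0 : \det (Hm 0) = 4.
Proof.
have h1 : (- Jm) *m Km 1 = 1%:M by exact: JJ.
have h2 : Km 1 *m (- Jm) = 1%:M by rewrite mulmxN -mulNmx; exact: JJ.
have [d _] := level_g (ltnSn 0) h1 h2.
have -> : Hm 0 = mat (nv 1) (nv 1) (sk 1) by [].
rewrite d.
have -> : Km 1 = Jm by [].
by rewrite det_Jm s1 mul1r.
Qed.

Lemma det_H2 : \det (Hm 2) = 1.
Proof. exact: det_Jm. Qed.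

Definition dA g := \det (mat (nv g) (nv g) (sk g)).
Definition dK g := \det (Km g).

Lemma step g : (1 <= g)%N -> dK g != 0 ->
  dA g.+1 = 4 * dA g ^+ 2 * dK g ^+ 2 /\ dK g.+1 = dK g ^+ 3 * dA g.
Proof.
move=> g1 nz.
have U : Km g \in unitmx by rewrite unitmxE unitfE.
have h1 := mulVmx U; have h2 := mulmxV U.
have [d _] := level_g g1 h1 h2.
have n4 := nv_ge4 g.
have e0 : nv g.+1 = (4 - 0 + ((nv g - 2) + ((nv g - 2) + ((nv g - 2) + (nv g - 2)))))%N.
  by rewrite nvS //; lia.
have e2 : (nv g.+1 - 2 = 4 - 2 + ((nv g - 2) + ((nv g - 2) + ((nv g - 2) + (nv g - 2)))))%N.
  by rewrite nvS //; lia.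
have YA : dA g.+1 = \det (Ym g 0) by rewrite /dA -(det_cast e0) mat_cast.
have YK : dK g.+1 = \det (Ym g 2) by rewrite /dK /Km -(det_cast e2) mat_cast.
rewrite YA YK (level_succ (o:=0) g1 isT h1 h2) (level_succ (o:=2) g1 isT h1 h2) det_H0 det_H2 /dA d /dK.
by split; ring.
Qed.

Lemma nonzero g : (1 <= g)%N -> dK g != 0 /\ dA g != 0.
Proof.
elim: g => // g IH _; case: g IH => [_|g IH].
  rewrite /dK /dA (_ : Km 1 = Jm) // det_Jm; split; first exact: oner_neq0.
  by change (\det (Hm 0) != 0); rewrite det_H0.
have g1 : (1 <= g.+1)%N by [].
have [nK nA] := IH g1.
have [eA eK] := step g1 nK.
by rewrite eA eK; split; rewrite ?mulf_neq0 ?expf_neq0.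
Qed.

Theorem lemma8 (g : nat) : (1 <= g)%N ->
  \det (A g.+1) = 4 * (\det (A g)) ^+ 2 * (\det (K g)) ^+ 2.
Proof.
move=> g1; apply: (@intr_inj rat).
rewrite rmorphM rmorphM !rmorphXn -!det_map_mx !Ar_mat Kr_mat.
have [nK _] := nonzero g1.
have [eA _] := step g1 nK.
by move: eA; rewrite /dA /dK => ->.
Qed.
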